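(* Let $W$ be a normal WPO-dilator and let $(\mathcal T W,\iota,\kappa)$ be a Kruskal derivative of $W$. Then $\mathcal T W$ is a normal WPO-dilator.
   Context: A quasi embedding between partial orders $X,Y$ is a function $f$ with $f(x)\leq_Y f(y)\Rightarrow x\leq_X y$; an embedding also satisfies the converse. $\mathrm{PO}$ is the category of partial orders and quasi embeddings. $[X]^{<\omega}$ denotes the finite subsets of $X$, with $[f]^{<\omega}(a)=\{f(x)\mid x\in a\}$. A PO-dilator is a functor $W:\mathrm{PO}\to\mathrm{PO}$ mapping embeddings to embeddings, with a natural transformation $\operatorname{supp}^W:W\Rightarrow[\cdot]^{<\omega}$ such that for every embedding $f:X\to Y$, $\operatorname{rng}(W(f))=\{\sigma\in W(Y)\mid\operatorname{supp}^W_Y(\sigma)\subseteq\operatorname{rng}(f)\}$. For finite $a,b\subseteq X$, $a\leq^{\mathrm{fin}}_X b$ iff every $x\in a$ has some $y\in b$ with $x\leq_X y$ ($z\leq^{\mathrm{fin}}_X b$ means $\{z\}\leq^{\mathrm{fin}}_X b$). $W$ is normal if $\sigma\leq_{W(X)}\tau$ implies $\operatorname{supp}^W_X(\sigma)\leq^{\mathrm{fin}}_X\operatorname{supp}^W_X(\tau)$. A well partial order is a partial order in which every infinite sequence $x_0,x_1,\dots$ has $i<j$ with $x_i\leq x_j$; $W$ is a WPO-dilator if $W(X)$ is a well partial order whenever $X$ is. A Kruskal fixed point of $W$ over a partial order $X$ is a partial order $Z$ with functions $\iota:X\to Z$, $\kappa:W(Z)\to Z$ such that $\operatorname{rng}(\iota)\cap\operatorname{rng}(\kappa)=\emptyset$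 and, for all $x,y\in X$, $\sigma,\tau\in W(Z)$: $\iota(x)\leq_Z\iota(y)\Rightarrow x\leq_X y$; $\iota(x)\leq_Z\kappa(\tau)$ iff $\iota(x)\leq^{\mathrm{fin}}_Z\operatorname{supp}^W_Z(\tau)$; $\kappa(\sigma)\not\leq_Z\iota(y)$; $\kappa(\sigma)\leq_Z\kappa(\tau)$ iff ($\sigma\leq_{W(Z)}\tau$ or $\kappa(\sigma)\leq^{\mathrm{fin}}_Z\operatorname{supp}^W_Z(\tau)$). It is initial if for every Kruskal fixed point $(Z',\iota',\kappa')$ of $W$ over $X$ there is a unique quasi embedding $f:Z\to Z'$ with $f\circ\iota=\iota'$ and $f\circ\kappa=\kappa'\circ W(f)$. A Kruskal derivative of a normal PO-dilator $W$ is a tuple $(\mathcal T W,\iota,\kappa)$ consisting of a normal PO-dilator $\mathcal T W$ and families of functions $\iota_X:X\to\mathcal T W(X)$, $\kappa_X:W(\mathcal T W(X))\to\mathcal T W(X)$ indexed by partial orders $X$ such that (i) $(\mathcal T W(X),\iota_X,\kappa_X)$ is an initial Kruskal fixed point of $W$ over $X$ for each $X$, and (ii) $\iota_Y\circ f=\mathcal T W(f)\circ\iota_X$ and $\mathcal T W(f)\circ\kappa_X=\kappa_Y\circ W(\mathcal T W(f))$ for every quasi embedding $f:X\to Y$. *)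

(* Defs.v *)
From Stdlib Require Import List Arith.
Set Implicit Arguments.

Record PO : Type := MkPO {
  carrier :> Type;
  le : carrier -> carrier -> Prop;
  le_refl : forall x, le x x;
  le_antisym : forall x y, le x y -> le y x -> x = y;
  le_trans : forall x y z, le x y -> le y z -> le x z
}.
Arguments le {p} _ _.

Record qemb (X Y : PO) : Type := MkQemb {
  qfun :> carrier X -> carrier Y;
  qfun_qe : forall x y, le (qfun x) (qfun y) -> le x y
}.

Definition is_embedding (X Y : PO) (f : qemb X Y) : Prop :=
  forall x y, le (f x) (f y) <-> le x y.

Definition qemb_id (X : PO) : qemb X X :=
  @MkQemb X X (fun x => x) (fun x y h => h).

Definition qemb_comp (X Y Z : PO) (g : qemb Y Z) (f : qemb X Y) : qemb X Z :=
  @MkQemb X Z (fun x => g (f x))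
    (fun x y h => qfun_qe f x y (qfun_qe g (f x) (f y) h)).

Definition finite_set (X : Type) (a : X -> Prop) : Prop :=
  exists l : list X, forall x, a x -> In x l.

Definition le_fin {X : PO} (a b : carrier X -> Prop) : Prop :=
  forall x, a x -> exists y, b y /\ le x y.

Record PreDilator : Type := MkPreDilator {
  dobj :> PO -> PO;
  dmap : forall X Y : PO, qemb X Y -> qemb (dobj X) (dobj Y);
  dsupp : forall X : PO, carrier (dobj X) -> carrier X -> Prop
}.
Arguments dmap p {X Y} _.
Arguments dsupp p {X} _ _.

Definition is_PO_dilator (W : PreDilator) : Prop :=
  (forall (X : PO) (s : carrier (W X)), dmap W (qemb_id X) s = s) /\
  (forall (X Y Z : PO) (f : qemb X Y) (g : qemb Y Z) (s : carrier (W X)),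
      dmap W (qemb_comp g f) s = dmap W g (dmap W f s)) /\
  (forall (X Y : PO) (f : qemb X Y), is_embedding f -> is_embedding (dmap W f)) /\
  (forall (X : PO) (s : carrier (W X)), finite_set (dsupp W s)) /\
  (* naturality of supp : W => [.]^{<omega} *)
  (forall (X Y : PO) (f : qemb X Y) (s : carrier (W X)) (y : carrier Y),
      dsupp W (dmap W f s) y <-> exists x, dsupp W s x /\ f x = y) /\
  (forall (X Y : PO) (f : qemb X Y), is_embedding f ->
     forall t : carrier (W Y),
       (exists s, dmap W f s = t) <-> (forall y, dsupp W t y -> exists x, f x = y)).

Definition is_normal (W : PreDilator) : Prop :=
  forall (X : PO) (s t : carrier (W X)), le s t -> le_fin (dsupp W s) (dsupp W t).

Definition is_WPO (X : PO) : Prop :=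
  forall s : nat -> carrier X, exists i j, i < j /\ le (s i) (s j).

Definition is_WPO_dilator (W : PreDilator) : Prop :=
  is_PO_dilator W /\ forall X : PO, is_WPO X -> is_WPO (W X).

Definition is_Kruskal_fixed_point (W : PreDilator) (X Z : PO)
    (iota : carrier X -> carrier Z) (kappa : carrier (W Z) -> carrier Z) : Prop :=
  (forall x s, iota x <> kappa s) /\
  (forall x y, le (iota x) (iota y) -> le x y) /\
  (forall x t, le (iota x) (kappa t) <-> le_fin (fun z => z = iota x) (dsupp W t)) /\
  (forall s y, ~ le (kappa s) (iota y)) /\
  (forall s t, le (kappa s) (kappa t) <->
                 (le s t \/ le_fin (fun z => z = kappa s) (dsupp W t))).

Definition is_initial_Kruskal_fixed_point (W : PreDilator) (X Z : PO)
    (iota : carrier X -> carrier Z) (kappa : carrier (W Z) -> carrier Z) : Prop :=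
  is_Kruskal_fixed_point W X Z iota kappa /\
  forall (Z' : PO) (iota' : carrier X -> carrier Z')
         (kappa' : carrier (W Z') -> carrier Z'),
    is_Kruskal_fixed_point W X Z' iota' kappa' ->
    exists f : qemb Z Z',
      ((forall x, f (iota x) = iota' x) /\
       (forall s, f (kappa s) = kappa' (dmap W f s))) /\
      (forall g : qemb Z Z',
         (forall x, g (iota x) = iota' x) ->
         (forall s, g (kappa s) = kappa' (dmap W g s)) ->
         forall z, g z = f z).

Definition is_Kruskal_derivative (W TW : PreDilator)
    (iota : forall X : PO, carrier X -> carrier (TW X))
    (kappa : forall X : PO, carrier (W (TW X)) -> carrier (TW X)) : Prop :=
  is_PO_dilator TW /\ is_normal TW /\
  (forall X : PO, is_initial_Kruskal_fixed_point W X (TW X) (iota X) (kappa X)) /\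
  (forall (X Y : PO) (f : qemb X Y) (x : carrier X),
      iota Y (f x) = dmap TW f (iota X x)) /\
  (forall (X Y : PO) (f : qemb X Y) (s : carrier (W (TW X))),
      dmap TW f (kappa X s) = kappa Y (dmap W (dmap TW f) s)).

(* Main.v *)
Require Import Defs.
From Stdlib Require Import List Arith Lia PeanoNat.
From Stdlib Require Import Classical ClassicalEpsilon FunctionalExtensionality ProofIrrelevance Eqdep_dec.

Set Implicit Arguments.

Lemma qemb_inj (A B : PO) (f : qemb A B) a b : f a = f b -> a = b.
Proof.
  intro H. apply le_antisym; apply (qfun_qe f); rewrite H; apply le_refl.
Qed.

Lemma qemb_ext (A B : PO) (f g : qemb A B) : (forall x, f x = g x) -> f = g.
Proof.
  destruct f as [f Hf], g as [g Hg]; simpl; intro H.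
  assert (f = g) by (apply functional_extensionality; exact H). subst g.
  f_equal. apply proof_irrelevance.
Qed.

Section Sub.
Variable Z : PO.
Variable P : carrier Z -> Prop.
Definition subT := {z : carrier Z | P z}.
Definition suble (a b : subT) : Prop := le (proj1_sig a) (proj1_sig b).
Lemma suble_refl a : suble a a. Proof. apply le_refl. Qed.
Lemma suble_anti a b : suble a b -> suble b a -> a = b.
Proof.
  destruct a as [a Ha], b as [b Hb]; unfold suble; simpl; intros H1 H2.
  assert (a = b) by (apply le_antisym; auto). subst b. f_equal; apply proof_irrelevance.
Qed.
Lemma suble_trans a b c : suble a b -> suble b c -> suble a c.
Proof. unfold suble; intros; eapply le_trans; eauto. Qed.
Definition subPO : PO := MkPO suble suble_refl suble_anti suble_trans.
Definition sincl : qemb subPO Z := @MkQemb subPO Z (fun a => proj1_sig a) (fun a b h => h).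
Lemma sincl_emb : is_embedding sincl.
Proof. intros a b; simpl; tauto. Qed.
End Sub.

Section MBS.
Variable A : Type.
Variable R : A -> A -> Prop.
Variable h : A -> nat.
Definition bad (f : nat -> A) := forall i j, i < j -> ~ R (f i) (f j).

Lemma min_nat (P : nat -> Prop) : (exists n, P n) -> exists n, P n /\ forall m, P m -> n <= m.
Proof.
  intros [n Hn]. induction n as [n IH] using lt_wf_ind.
  destruct (classic (exists m, m < n /\ P m)) as [(m & Hm & Pm)|Hno].
  - exact (IH m Hm Pm).
  - exists n; split; auto. intros m Pm. destruct (le_lt_dec n m); auto.
    exfalso; apply Hno; eauto.
Qed.

Definition ext (f g : nat -> A) n := forall i, i < n -> g i = f i.
Definition nextP (f : nat -> A) (n : nat) (g : nat -> A) :=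
  bad g /\ ext f g n /\ forall g', bad g' -> ext f g' n -> h (g n) <= h (g' n).

Lemma next_ex f n : bad f -> exists g, nextP f n g.
Proof.
  intro Hf.
  destruct (min_nat (fun k => exists g, (bad g /\ ext f g n) /\ h (g n) = k)) as (k & (g & [Hg1 Hg2] & Hk) & Hmin).
  { exists (h (f n)), f; split; [split; [exact Hf| intros i _; reflexivity]|reflexivity]. }
  exists g; split; [exact Hg1|split; [exact Hg2|]].
  intros g' Hb He. rewrite Hk. apply Hmin. exists g'; auto.
Qed.

Variable f0 : nat -> A.
Hypothesis Hf0 : bad f0.

Fixpoint Fs (n : nat) : {f : nat -> A | bad f} :=
  match n with
  | 0 => let g := constructive_indefinite_description _ (next_ex 0 Hf0) in
         exist _ (proj1_sig g) (proj1 (proj2_sig g))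
  | S n' => let p := Fs n' in
         let g := constructive_indefinite_description _ (next_ex (S n') (proj2_sig p)) in
         exist _ (proj1_sig g) (proj1 (proj2_sig g))
  end.

Lemma Fs0 : nextP f0 0 (proj1_sig (Fs 0)).
Proof. simpl. destruct (constructive_indefinite_description _ _) as [g Hg]; exact Hg. Qed.
Lemma FsS n : nextP (proj1_sig (Fs n)) (S n) (proj1_sig (Fs (S n))).
Proof. simpl. destruct (constructive_indefinite_description _ _) as [g Hg]; exact Hg. Qed.

Definition mseq n := proj1_sig (Fs n) n.

Lemma stable d n i : i <= n -> proj1_sig (Fs (d + n)) i = proj1_sig (Fs n) i.
Proof.
  intro Hi. induction d; simpl plus; auto.
  destruct (FsS (d + n)) as (_ & He & _). rewrite He by lia. exact IHd.
Qed.

Lemma m_eq n i : i <= n -> proj1_sig (Fs n) i = mseq i.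
Proof.
  intro H. destruct (Nat.le_exists_sub i n H) as (d & Hd & _). subst n.
  unfold mseq. apply stable; lia.
Qed.

Lemma mseq_bad : bad mseq.
Proof.
  intros i j Hij. rewrite <- (@m_eq j i) by lia. unfold mseq.
  apply (proj2_sig (Fs j)); auto.
Qed.

Lemma mseq_min n g : (forall i, i < n -> g i = mseq i) -> h (g n) < h (mseq n) -> ~ bad g.
Proof.
  intros He Hh Hb. destruct n as [|p].
  - destruct Fs0 as (_ & _ & Hm). specialize (Hm g Hb (fun i H => ltac:(lia))).
    unfold mseq in Hh. lia.
  - destruct (FsS p) as (_ & _ & Hm).
    assert (ext (proj1_sig (Fs p)) g (S p)) as E.
    { intros i Hi. rewrite He by lia. symmetry; apply m_eq; lia. }
    specialize (Hm g Hb E). unfold mseq in Hh. lia.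
Qed.
End MBS.

Lemma mbs (A : Type) (R : A -> A -> Prop) (h : A -> nat) :
  (exists f, bad R f) -> exists m, bad R m /\
     forall n g, (forall i, i < n -> g i = m i) -> h (g n) < h (m n) -> ~ bad R g.
Proof.
  intros [f Hf]. exists (@mseq _ R h f Hf). split.
  - apply mseq_bad.
  - intros n g. apply mseq_min.
Qed.

Lemma pigeon (A : Type) (L : list A) : forall (u : nat -> A), (forall l, In (u l) L) ->
  exists i j, i < j /\ u i = u j.
Proof.
  induction L as [|a L IH]; intros u Hu.
  - destruct (Hu 0).
  - destruct (classic (exists i, u i = a)) as [(i & Hi)|Hno].
    + destruct (classic (exists j, i < j /\ u j = a)) as [(j & Hj & Hja)|Hno2].
      * exists i, j; split; auto; congruence.
      * destruct (IH (fun l => u (S i + l))) as (p & q & Hpq & E).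
        { intro l. destruct (Hu (S i + l)) as [E|E]; auto.
          exfalso; apply Hno2; exists (S i + l); split; auto; lia. }
        exists (S i + p), (S i + q); split; auto; lia.
    + apply IH. intro l. destruct (Hu l) as [E|E]; auto. exfalso; apply Hno; eauto.
Qed.

Lemma extract (P : nat -> nat -> Prop) :
  (forall N, exists i, N <= i /\ P N i) ->
  exists sel : nat -> nat, (forall p, sel p < sel (S p) /\ P (S (sel p)) (sel (S p))) /\ P 0 (sel 0).
Proof.
  intro H.
  pose (nx := fun N => proj1_sig (constructive_indefinite_description _ (H N))).
  assert (Hnx : forall N, N <= nx N /\ P N (nx N)).
  { intro N. unfold nx. destruct (constructive_indefinite_description _ _); auto. }
  pose (sel := fix sel p := match p with 0 => nx 0 | S p => nx (S (sel p)) end).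
  exists sel. split.
  - intro p. simpl. destruct (Hnx (S (sel p))). split; auto.
  - apply Hnx.
Qed.

Lemma incr_mono (sel : nat -> nat) : (forall p, sel p < sel (S p)) -> forall p q, p < q -> sel p < sel q.
Proof.
  intros H p q Hpq. induction q; [lia|].
  destruct (Nat.eq_dec p q); [subst; apply H|].
  specialize (IHq ltac:(lia)). specialize (H q). lia.
Qed.

Set Implicit Arguments.

Lemma extract2 (P0 : nat -> Prop) (Q : nat -> nat -> Prop) :
  (exists b, P0 b) -> (forall a, exists b, a < b /\ Q a b) ->
  exists sel : nat -> nat, P0 (sel 0) /\ forall p, sel p < sel (S p) /\ Q (sel p) (sel (S p)).
Proof.
  intros H0 H.
  pose (nx := fun a => proj1_sig (constructive_indefinite_description _ (H a))).
  assert (Hnx : forall a, a < nx a /\ Q a (nx a)).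
  { intro a. unfold nx. destruct (constructive_indefinite_description _ _); auto. }
  pose (b0 := proj1_sig (constructive_indefinite_description _ H0)).
  assert (Hb0 : P0 b0) by (unfold b0; destruct (constructive_indefinite_description _ _); auto).
  exists (fix sel p := match p with 0 => b0 | S p => nx (sel p) end). split; auto.
Qed.

Section GenWPO.
Variable W : PreDilator.
Hypothesis HW : is_PO_dilator W.
Hypothesis HWW : forall X, is_WPO X -> is_WPO (W X).
Variables X Z : PO.
Hypothesis HX : is_WPO X.
Variable iota : carrier X -> carrier Z.
Variable kappa : carrier (W Z) -> carrier Z.
Variable h : carrier Z -> nat.
Hypothesis Hiota : forall x y, le x y -> le (iota x) (iota y).
Hypothesis Hkap : forall s t, le s t -> le (kappa s) (kappa t).
Hypothesis Hsub : forall s u, dsupp W s u -> le u (kappa s).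
Hypothesis Hcase : forall F, (exists x, F = iota x) \/
   (exists s, F = kappa s /\ forall u, dsupp W s u -> h u < h F).

Theorem gen_wpo : is_WPO Z.
Proof.
  destruct HW as (_ & _ & Hemb & Hfin & _ & Hsupp).
  intro s. apply NNPP; intro Hn.
  assert (Hbad : bad (@le Z) s). { intros i j Hij Hle. apply Hn; eauto. }
  destruct (mbs h (ex_intro _ s Hbad)) as (m & Hm & Hmin).
  clear s Hn Hbad.
  destruct (classic (forall N, exists i, N <= i /\ exists x, m i = iota x)) as [Hinf|Hfin'].
  - destruct (extract2 (fun b => exists x, m b = iota x) (fun _ b => exists x, m b = iota x))
      as (sel & H0 & Hsel).
    { destruct (Hinf 0) as (i & _ & Hi); eauto. }
    { intro a. destruct (Hinf (S a)) as (i & Hi & Hx). exists i; split; auto. }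
    assert (HP : forall p, exists x, m (sel p) = iota x). { intros [|p]; [exact H0| apply Hsel]. }
    pose (xs := fun p => proj1_sig (constructive_indefinite_description _ (HP p))).
    assert (Hxs : forall p, m (sel p) = iota (xs p)).
    { intro p; unfold xs; destruct (constructive_indefinite_description _ _); auto. }
    destruct (HX xs) as (p & q & Hpq & Hle).
    apply (Hm (sel p) (sel q)).
    + apply incr_mono; auto. intro; apply Hsel.
    + rewrite !Hxs. apply Hiota; auto.
  - apply not_all_ex_not in Hfin'. destruct Hfin' as [N HN].
    assert (Hk : forall k, exists sg, m (k + N) = kappa sg /\ forall u, dsupp W sg u -> h u < h (m (k+N))).
    { intro k. destruct (Hcase (m (k+N))) as [(x & Hx)|H]; auto.
      exfalso; apply HN; exists (k+N); split; [lia| eauto]. }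
    pose (sg := fun k => proj1_sig (constructive_indefinite_description _ (Hk k))).
    assert (Hsg : forall k, m (k+N) = kappa (sg k) /\ forall u, dsupp W (sg k) u -> h u < h (m (k+N))).
    { intro k; unfold sg; destruct (constructive_indefinite_description _ _); auto. }
    pose (U := subPO Z (fun u : carrier Z => exists k, dsupp W (sg k) u)).
    assert (HU : is_WPO U).
    { intro v. apply NNPP; intro Hn. assert (Hb : bad (@le U) v).
      { intros i j Hij Hle. apply Hn; eauto. }
      pose (kk := fun l => proj1_sig (constructive_indefinite_description _ (proj2_sig (v l)))).
      assert (Hkk : forall l, dsupp W (sg (kk l)) (proj1_sig (v l))).
      { intro l; unfold kk; destruct (constructive_indefinite_description _ _); auto. }
      assert (Hunb : forall K L, exists l, L <= l /\ K <= kk l).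
      { intros K L. apply NNPP; intro Hno.
        assert (Hlt : forall l, L <= l -> kk l < K).
        { intros l Hl. destruct (le_lt_dec K (kk l)); auto. exfalso; apply Hno; eauto. }
        pose (lst := fun k => proj1_sig (constructive_indefinite_description _ (Hfin Z (sg k)))).
        assert (Hlst : forall k u, dsupp W (sg k) u -> In u (lst k)).
        { intros k u; unfold lst; destruct (constructive_indefinite_description _ _); simpl; auto. }
        destruct (pigeon (flat_map lst (seq 0 K)) (fun l => proj1_sig (v (L + l)))) as (i & j & Hij & E).
        { intro l. apply in_flat_map. exists (kk (L + l)). split.
          - apply in_seq. specialize (Hlt (L+l)). lia.
          - apply Hlst, Hkk. }
        apply (Hb (L+i) (L+j)); [lia|]. simpl. unfold suble. rewrite E. apply le_refl. }
      destruct (extract2 (fun _ => True) (fun a b => kk a < kk b)) as (sel & _ & Hsel).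
      { exists 0; auto. }
      { intro a. destruct (Hunb (S (kk a)) (S a)) as (l & H1 & H2). exists l; split; lia. }
      assert (Hmono : forall p q, p < q -> kk (sel p) < kk (sel q)).
      { apply (incr_mono (fun p => kk (sel p))). intro p; apply Hsel. }
      assert (Hmono' : forall q, kk (sel 0) <= kk (sel q)).
      { intros [|q]; auto. specialize (Hmono 0 (S q)). lia. }
      pose (n0 := kk (sel 0) + N).
      pose (g := fun i => if i <? n0 then m i else proj1_sig (v (sel (i - n0)))).
      apply (Hmin n0 g).
      + intros i Hi. unfold g. rewrite (proj2 (Nat.ltb_lt _ _) Hi). reflexivity.
      + unfold g. rewrite Nat.ltb_irrefl, Nat.sub_diag. unfold n0. apply (proj2 (Hsg _)). apply Hkk.
      + intros i j Hij Hle. unfold g in Hle.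
        destruct (i <? n0) eqn:Ei, (j <? n0) eqn:Ej;
          [apply Nat.ltb_lt in Ei; apply Nat.ltb_lt in Ej
          |apply Nat.ltb_lt in Ei; apply Nat.ltb_ge in Ej
          |apply Nat.ltb_ge in Ei; apply Nat.ltb_lt in Ej
          |apply Nat.ltb_ge in Ei; apply Nat.ltb_ge in Ej].
        * exact (Hm i j Hij Hle).
        * set (q := j - n0) in *.
          assert (H2 : le (proj1_sig (v (sel q))) (m (kk (sel q) + N))).
          { rewrite (proj1 (Hsg _)). apply Hsub. apply Hkk. }
          apply (Hm i (kk (sel q) + N)).
          -- specialize (Hmono' q). unfold n0 in Ei. lia.
          -- eapply le_trans; eauto.
        * lia.
        * apply (Hb (sel (i - n0)) (sel (j - n0))).
          -- apply incr_mono; [intro; apply Hsel| lia].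
          -- exact Hle. }
    assert (Htau : forall k, exists t, dmap W (sincl Z (fun u : carrier Z => exists k, dsupp W (sg k) u)) t = sg k).
    { intro k. apply (Hsupp _ _ _ (@sincl_emb _ _)). intros y Hy.
      exists (exist _ y (ex_intro _ k Hy)). reflexivity. }
    pose (tau := fun k => proj1_sig (constructive_indefinite_description _ (Htau k))).
    assert (Htau' : forall k, dmap W (sincl Z (fun u : carrier Z => exists k, dsupp W (sg k) u)) (tau k) = sg k).
    { intro k; unfold tau; destruct (constructive_indefinite_description _ _); auto. }
    destruct (HWW HU tau) as (a & b & Hab & Hle).
    apply (Hm (a + N) (b + N)); [lia|].
    rewrite (proj1 (Hsg a)), (proj1 (Hsg b)). apply Hkap.
    rewrite <- (Htau' a), <- (Htau' b). apply (Hemb _ _ _ (@sincl_emb _ _)). exact Hle.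
Qed.
End GenWPO.

Unset Implicit Arguments.

Definition emptyPO : PO :=
  @MkPO Empty_set (fun _ _ => False) (fun x => match x with end)
    (fun x _ _ _ => match x with end) (fun x _ _ _ _ => match x with end).

Section Constr.
Variable W : PreDilator.
Hypothesis HW : is_PO_dilator W.
Hypothesis HN : is_normal W.
Variable X : PO.

Lemma Wnat (A B : PO) (f : qemb A B) s y :
  dsupp W (dmap W f s) y <-> exists x, dsupp W s x /\ f x = y.
Proof. destruct HW as (_ & _ & _ & _ & H & _). apply H. Qed.
Lemma Wsupp (A B : PO) (f : qemb A B) : is_embedding f -> forall t,
  (forall y, dsupp W t y -> exists x, f x = y) -> exists s, dmap W f s = t.
Proof. destruct HW as (_ & _ & _ & _ & _ & H). intros Hf t Ht. apply (H _ _ f Hf t). exact Ht. Qed.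
Lemma Wemb (A B : PO) (f : qemb A B) : is_embedding f -> is_embedding (dmap W f).
Proof. destruct HW as (_ & _ & H & _). apply H. Qed.

Definition sumT (P : PO) := (carrier X + carrier (W P))%type.

Record Stage := mkStage {
  sP : PO;
  sle : sumT sP -> sumT sP -> Prop;
  s_refl : forall a, sle a a;
  s_anti : forall a b, sle a b -> sle b a -> a = b;
  s_trans : forall a b c, sle a b -> sle b c -> sle a c;
  se : carrier sP -> sumT sP;
  s_emb : forall a b, sle (se a) (se b) <-> le a b;
  s_I0 : forall x y, sle (inl x) (inl y) <-> le x y;
  s_Ia : forall x t, sle (inl x) (inr t) <-> exists z, dsupp W t z /\ sle (inl x) (se z);
  s_Ib : forall s y, ~ sle (inr s) (inl y);
  s_Ic : forall s t, sle (inr s) (inr t) <-> le s t \/ exists z, dsupp W t z /\ sle (inr s) (se z);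
  s_Id : forall a b, sle a (se b) -> exists c, a = se c;
  s_Ie : forall t z, dsupp W t z -> ~ sle (inr t) (se z);
  s_If : forall u w, dsupp W u w -> sle (se w) (inr u)
}.

Definition Qpo (S : Stage) : PO := @MkPO (sumT (sP S)) (sle S) (s_refl S) (s_anti S) (s_trans S).
Definition qe (S : Stage) : qemb (sP S) (Qpo S) :=
  @MkQemb (sP S) (Qpo S) (se S) (fun a b h => proj1 (s_emb S a b) h).

Section Step.
Variable S : Stage.

Definition leR (a b : sumT (Qpo S)) : Prop :=
  match a, b with
  | inl x, inl y => le x y
  | inl x, inr t => exists z, dsupp W t z /\ sle S (inl x) z
  | inr _, inl _ => False
  | inr s, inr t => le s t \/ exists z, dsupp W t z /\ exists s', dmap W (qe S) s' = s /\ sle S (inr s') z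
  end.

Definition eR (a : carrier (Qpo S)) : sumT (Qpo S) :=
  match a with inl x => inl x | inr s => inr (dmap W (qe S) s) end.

Lemma qe_emb : is_embedding (qe S).
Proof. intros a b. apply (s_emb S). Qed.
Lemma We_emb : is_embedding (dmap W (qe S)).
Proof. apply Wemb, qe_emb. Qed.

Lemma below_range s t : le s (dmap W (qe S) t) -> exists s', dmap W (qe S) s' = s.
Proof.
  intro H. apply Wsupp; [apply qe_emb|]. intros y Hy.
  destruct (HN _ _ _ H y Hy) as (y' & Hy' & Hle). apply Wnat in Hy'.
  destruct Hy' as (c & Hc & <-). apply (s_Id S) in Hle. destruct Hle as [c' ->]. exists c'; reflexivity.
Qed.

Lemma leR_refl a : leR a a.
Proof. destruct a; simpl; [apply le_refl| left; apply le_refl]. Qed.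

Lemma leR_trans a b c : leR a b -> leR b c -> leR a c.
Proof.
  destruct a as [x|s], b as [y|t], c as [w|u]; simpl; try (intros ? ?; contradiction).
  - apply le_trans.
  - intros Hxy (z & Hz & Hyz). exists z; split; auto. eapply (s_trans S); [|exact Hyz].
    apply (s_I0 S); auto.
  - intros (z & Hz & Hxz) [Htu | (z2 & Hz2 & t' & Ht' & Ht'z2)].
    + destruct (HN _ _ _ Htu z Hz) as (z2 & Hz2 & Hzz2). exists z2; split; auto.
      eapply (s_trans S); eauto.
    + subst t. apply Wnat in Hz. destruct Hz as (z' & Hz' & <-). exists z2; split; auto.
      eapply (s_trans S); [|exact Ht'z2]. apply (s_Ia S). exists z'; split; auto.
  - intros [Hst | (z & Hz & s' & Hs' & Hs'z)] [Htu | (z2 & Hz2 & t' & Ht' & Ht'z2)].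
    + left; eapply le_trans; eauto.
    + right. subst t. destruct (below_range _ _ Hst) as (s' & Hs'). subst s.
      exists z2; split; auto. exists s'; split; auto. eapply (s_trans S); [|exact Ht'z2].
      apply (s_Ic S). left. apply (We_emb s' t'); exact Hst.
    + right. destruct (HN _ _ _ Htu z Hz) as (z2 & Hz2 & Hzz2). exists z2; split; auto.
      exists s'; split; auto. eapply (s_trans S); eauto.
    + right. subst t. apply Wnat in Hz. destruct Hz as (z' & Hz' & <-). exists z2; split; auto.
      exists s'; split; auto. eapply (s_trans S); [|exact Ht'z2]. apply (s_Ic S). right.
      exists z'; split; auto.
Qed.

Lemma eR_emb a b : leR (eR a) (eR b) <-> sle S a b.
Proof.
  destruct a as [x|s], b as [y|t]; simpl.
  - symmetry; apply (s_I0 S).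
  - rewrite (s_Ia S). split; intros (z & Hz & H).
    + apply Wnat in Hz; destruct Hz as (z' & Hz' & <-); eauto.
    + exists (se S z); split; auto. apply Wnat; eauto.
  - split; intro H; [destruct H| exact (s_Ib S _ _ H)].
  - rewrite (s_Ic S). split.
    + intros [H|(z & Hz & s' & Hs' & H)].
      * left; apply We_emb; auto.
      * right. apply qemb_inj in Hs'; subst s'. apply Wnat in Hz.
        destruct Hz as (z' & Hz' & <-). exists z'; split; auto.
    + intros [H|(z & Hz & H)].
      * left; apply We_emb; auto.
      * right. exists (se S z); split; [apply Wnat; eauto| exists s; split; auto].
Qed.

Lemma leR_Ie t z : dsupp W t z -> ~ leR (inr t) (eR z).
Proof.
  intros Hz. destruct z as [y|u]; simpl; [tauto|].
  intros [H | (z2 & Hz2 & t' & Ht' & H)].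
  - destruct (HN _ _ _ H _ Hz) as (v & Hv & Hle). apply Wnat in Hv.
    destruct Hv as (w & Hw & <-). exact (s_Ie S u w Hw Hle).
  - subst t. apply Wnat in Hz2. destruct Hz2 as (w & Hw & <-). apply Wnat in Hz.
    destruct Hz as (z' & Hz' & Hz'e). simpl in Hz'e.
    apply (s_Ie S t' z' Hz'). eapply (s_trans S); [exact H|]. rewrite Hz'e.
    apply (s_If S); exact Hw.
Qed.

Lemma leR_inr_right (s t : carrier (W (Qpo S))) :
  (exists z, dsupp W t z /\ exists s', dmap W (qe S) s' = s /\ sle S (inr s') z) ->
  exists z, dsupp W t z /\ leR (inr s) (eR z).
Proof.
  intros (z & Hz & s' & <- & H). exists z; split; auto. apply (proj2 (eR_emb (inr s') z)). exact H.
Qed.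

Lemma leR_anti a b : leR a b -> leR b a -> a = b.
Proof.
  intros H1 H2.
  destruct a as [x|s], b as [y|t]; try contradiction.
  - f_equal; apply le_antisym; auto.
  - destruct H1 as [H1|H1].
    + destruct H2 as [H2|H2].
      * f_equal; apply le_antisym; auto.
      * exfalso. destruct (leR_inr_right _ _ H2) as (z & Hz & H). apply (leR_Ie _ _ Hz).
        apply leR_trans with (b := inr t); [simpl; left; exact H1| exact H].
    + exfalso. destruct (leR_inr_right _ _ H1) as (z & Hz & H). apply (leR_Ie _ _ Hz).
      eapply leR_trans; [exact H2|exact H].
Qed.

Lemma leR_Id a b : leR a (eR b) -> exists c, a = eR c.
Proof.
  destruct a as [x|s]; [intros _; exists (inl x); reflexivity|].
  destruct b as [y|t]; simpl; [contradiction|].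
  intros [H|(z & Hz & s' & Hs' & H)].
  - destruct (below_range _ _ H) as (s' & <-). exists (inr s'); reflexivity.
  - exists (inr s'); subst; reflexivity.
Qed.

Lemma leR_I0 x y : leR (inl x) (inl y) <-> le x y.
Proof. simpl; tauto. Qed.

Lemma leR_Ia x t : leR (inl x) (inr t) <-> exists z, dsupp W t z /\ leR (inl x) (eR z).
Proof.
  simpl. split; intros (z & Hz & H); exists z; split; auto.
  - apply (proj2 (eR_emb (inl x) z)); exact H.
  - apply (proj1 (eR_emb (inl x) z)); exact H.
Qed.

Lemma leR_Ib s y : ~ leR (inr s) (inl y).
Proof. simpl; tauto. Qed.

Lemma leR_Ic s t : leR (inr s) (inr t) <-> le s t \/ exists z, dsupp W t z /\ leR (inr s) (eR z).
Proof.
  split.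
  - intros [H|H]; [left; auto | right; apply leR_inr_right; auto].
  - intros [H|(z & Hz & H)]; [left; auto|]. right.
    destruct (leR_Id _ _ H) as (c & Hc). destruct c as [x|s']; simpl in Hc; [discriminate|].
    injection Hc; intro; subst s. exists z; split; auto. exists s'; split; auto.
    apply (eR_emb (inr s') z); exact H.
Qed.

Lemma leR_If u w : dsupp W u w -> leR (eR w) (inr u).
Proof.
  intro Hw. destruct w as [x|v]; simpl.
  - exists (inl x); split; auto; apply (s_refl S).
  - right; exists (inr v); split; auto; exists v; split; auto; apply (s_refl S).
Qed.

Definition step : Stage :=
  @mkStage (Qpo S) leR leR_refl leR_anti leR_trans eR eR_emb leR_I0 leR_Ia leR_Ib leR_Ic
    leR_Id leR_Ie leR_If.
End Step.

Definition le0 (a b : sumT emptyPO) : Prop :=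
  match a, b with inl x, inl y => le x y | inr s, inr t => le s t | _, _ => False end.
Definition se0 (e : carrier emptyPO) : sumT emptyPO := match e with end.

Lemma le0_refl a : le0 a a. Proof. destruct a; simpl; apply le_refl. Qed.
Lemma le0_anti a b : le0 a b -> le0 b a -> a = b.
Proof. destruct a, b; simpl; intros; try contradiction; f_equal; apply le_antisym; auto. Qed.
Lemma le0_trans a b c : le0 a b -> le0 b c -> le0 a c.
Proof. destruct a, b, c; simpl; intros; try contradiction; eapply le_trans; eauto. Qed.

Definition base : Stage.
Proof.
  refine (@mkStage emptyPO le0 le0_refl le0_anti le0_trans se0 _ _ _ _ _ _ _ _).
  - intros a; exact (match a : Empty_set with end).
  - simpl; tauto.
  - intros x t; simpl; split; [tauto| intros (z & _); exact (match z : Empty_set with end)].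
  - simpl; tauto.
  - intros s t; simpl; split; [tauto| intros [H|(z & _)]; [exact H| exact (match z : Empty_set with end)]].
  - intros a b; exact (match b : Empty_set with end).
  - intros t z; exact (match z : Empty_set with end).
  - intros u w; exact (match w : Empty_set with end).
Defined.

Fixpoint stage (n : nat) : Stage :=
  match n with 0 => base | S n => step (stage n) end.

Definition T (n : nat) : PO := sP (stage n).
Definition ee (n : nat) : qemb (T n) (T (S n)) := qe (stage n).

End Constr.

Section Colim.
Variable W : PreDilator.
Hypothesis HW : is_PO_dilator W.
Hypothesis HN : is_normal W.
Variable X : PO.

Local Notation TT := (T W HW HN X).
Local Notation EE := (ee W HW HN X).
Local Notation STG := (stage W HW HN X).

Lemma EE_emb n a b : le (EE n a) (EE n b) <-> le a b.
Proof. exact (s_emb W X (STG n) a b). Qed.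

Fixpoint tf (n : nat) (a : carrier (TT n)) (k : nat) {struct k} : option (carrier (TT k)) :=
  match k as k0 return option (carrier (TT k0)) with
  | 0 => match Nat.eq_dec n 0 with
         | left H => Some (eq_rect n (fun m => carrier (TT m)) a 0 H)
         | right _ => None end
  | S k' => match Nat.eq_dec n (S k') with
         | left H => Some (eq_rect n (fun m => carrier (TT m)) a (S k') H)
         | right _ => option_map (EE k') (tf n a k') end
  end.

Lemma tf_unf n a k : tf n a (S k) =
  match Nat.eq_dec n (S k) with
  | left H => Some (eq_rect n (fun m => carrier (TT m)) a (S k) H)
  | right _ => option_map (EE k) (tf n a k) end.
Proof. reflexivity. Qed.

Lemma tf_same n a : tf n a n = Some a.
Proof.
  destruct n; [reflexivity|]. rewrite tf_unf. destruct (Nat.eq_dec (S n) (S n)) as [H|H]; [|congruence].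
  rewrite (UIP_refl_nat _ H); reflexivity.
Qed.

Lemma tf_lt n a k : k < n -> tf n a k = None.
Proof.
  induction k; intro Hk.
  - destruct n; [lia|reflexivity].
  - rewrite tf_unf. destruct (Nat.eq_dec n (S k)); [lia|]. rewrite IHk by lia; reflexivity.
Qed.

Lemma tf_S n a k : n <= k -> tf n a (S k) = option_map (EE k) (tf n a k).
Proof. intro; rewrite tf_unf; destruct (Nat.eq_dec n (S k)); [lia|reflexivity]. Qed.

Definition thread (f : forall k, option (carrier (TT k))) : Prop :=
  (forall k a, f k = Some a -> f (S k) = Some (EE k a)) /\
  (forall k c, f (S k) = Some (EE k c) -> f k = Some c) /\
  (exists k a, f k = Some a).

Lemma th_up f k m a : thread f -> f k = Some a -> k <= m -> exists b, f m = Some b.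
Proof.
  intros [Hc _] Hk Hkm. destruct (Nat.le_exists_sub k m Hkm) as (d & -> & _).
  induction d; [exists a; exact Hk|]. destruct IHd as [b Hb]; [lia|].
  exists (EE _ b). apply Hc; exact Hb.
Qed.

Lemma th_lvl f g k a b : thread f -> thread g -> f k = Some a -> g k = Some b ->
  forall d a' b', f (d + k) = Some a' -> g (d + k) = Some b' -> (le a' b' <-> le a b).
Proof.
  intros Hf Hg Ha Hb d. induction d; intros a' b' Ha' Hb'.
  - simpl in *. rewrite Ha in Ha'; rewrite Hb in Hb'. injection Ha'; injection Hb'; intros; subst; tauto.
  - destruct (th_up f k (d + k) a Hf Ha) as [a1 Ha1]; [lia|].
    destruct (th_up g k (d + k) b Hg Hb) as [b1 Hb1]; [lia|].
    rewrite <- (IHd a1 b1 Ha1 Hb1).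
    pose proof (proj1 Hf _ _ Ha1) as E1. pose proof (proj1 Hg _ _ Hb1) as E2.
    simpl in Ha', Hb'. rewrite E1 in Ha'. rewrite E2 in Hb'.
    injection Ha'; injection Hb'; intros; subst. apply EE_emb.
Qed.

Lemma th_cmp f g k m a b a' b' : thread f -> thread g -> f k = Some a -> g k = Some b ->
  f m = Some a' -> g m = Some b' -> (le a b <-> le a' b').
Proof.
  intros Hf Hg Ha Hb Ha' Hb'. destruct (le_lt_dec k m) as [H|H].
  - destruct (Nat.le_exists_sub k m H) as (d & -> & _). symmetry.
    exact (th_lvl f g k a b Hf Hg Ha Hb d a' b' Ha' Hb').
  - assert (m <= k) as H' by lia. destruct (Nat.le_exists_sub m k H') as (d & -> & _).
    exact (th_lvl f g m a' b' Hf Hg Ha' Hb' d a b Ha Hb).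
Qed.

Lemma th_eq f g k a : thread f -> thread g -> f k = Some a -> g k = Some a -> f = g.
Proof.
  intros Hf Hg Ha Hb. apply functional_extensionality_dep.
  assert (Hup : forall d, f (d + k) = g (d + k)).
  { induction d; [simpl; congruence|].
    destruct (th_up f k (d + k) a Hf Ha) as [c Hc]; [lia|].
    simpl. rewrite (proj1 Hf _ _ Hc). rewrite IHd in Hc. rewrite (proj1 Hg _ _ Hc). reflexivity. }
  assert (Hdown : forall d m, m + d = k -> f m = g m).
  { induction d; intros m Hm.
    - replace m with (0 + k) by lia. apply Hup.
    - specialize (IHd (S m) ltac:(lia)).
      destruct (f m) as [c|] eqn:Ef.
      + pose proof (proj1 Hf _ _ Ef) as E. rewrite IHd in E. symmetry. apply (proj1 (proj2 Hg)). exact E.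
      + destruct (g m) as [c|] eqn:Eg; auto.
        pose proof (proj1 Hg _ _ Eg) as E. rewrite <- IHd in E. rewrite (proj1 (proj2 Hf) _ _ E) in Ef.
        discriminate. }
  intro m. destruct (le_lt_dec k m) as [H|H].
  - destruct (Nat.le_exists_sub k m H) as (d & -> & _). apply Hup.
  - apply (Hdown (k - m)). lia.
Qed.

Definition Zt := {f : forall k, option (carrier (TT k)) | thread f}.
Definition Zle (F G : Zt) : Prop :=
  exists k a b, proj1_sig F k = Some a /\ proj1_sig G k = Some b /\ le a b.

Lemma Zle_iff (F G : Zt) k a b : proj1_sig F k = Some a -> proj1_sig G k = Some b -> (Zle F G <-> le a b).
Proof.
  intros Ha Hb. split.
  - intros (k' & a' & b' & Ha' & Hb' & H).
    apply (th_cmp _ _ k' k a' b' a b (proj2_sig F) (proj2_sig G)); auto.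
  - intro H; exists k, a, b; auto.
Qed.

Lemma Z_def (F : Zt) : exists k a, proj1_sig F k = Some a.
Proof. apply (proj2 (proj2 (proj2_sig F))). Qed.

Lemma Z_up (F : Zt) k m a : proj1_sig F k = Some a -> k <= m -> exists b, proj1_sig F m = Some b.
Proof. intros; eapply th_up; eauto; apply (proj2_sig F). Qed.

Lemma Z_common (F G : Zt) : exists m a b, proj1_sig F m = Some a /\ proj1_sig G m = Some b.
Proof.
  destruct (Z_def F) as (k1 & a1 & H1), (Z_def G) as (k2 & a2 & H2).
  destruct (Z_up F k1 (k1 + k2) a1 H1) as [a Ha]; [lia|].
  destruct (Z_up G k2 (k1 + k2) a2 H2) as [b Hb]; [lia|].
  exists (k1 + k2), a, b; auto.
Qed.

Lemma Zle_refl F : Zle F F.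
Proof. destruct (Z_def F) as (k & a & H). exists k, a, a; repeat split; auto; apply le_refl. Qed.

Lemma Zle_trans F G H : Zle F G -> Zle G H -> Zle F H.
Proof.
  intros H1 H2.
  destruct (Z_common F G) as (m & a & b & Ha & Hb).
  destruct (Z_def H) as (k & c0 & Hc0).
  destruct (Z_up F m (m + k) a Ha) as [a' Ha']; [lia|].
  destruct (Z_up G m (m + k) b Hb) as [b' Hb']; [lia|].
  destruct (Z_up H k (m + k) c0 Hc0) as [c Hc]; [lia|].
  rewrite (Zle_iff _ _ _ _ _ Ha' Hb') in H1. rewrite (Zle_iff _ _ _ _ _ Hb' Hc) in H2.
  apply (Zle_iff _ _ _ _ _ Ha' Hc). eapply le_trans; eauto.
Qed.

Lemma Zeq (F G : Zt) k a : proj1_sig F k = Some a -> proj1_sig G k = Some a -> F = G.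
Proof.
  destruct F as [f Hf], G as [g Hg]; simpl; intros Ha Hb.
  assert (f = g) by (eapply th_eq; eauto). subst g. f_equal. apply proof_irrelevance.
Qed.

Lemma Zle_anti F G : Zle F G -> Zle G F -> F = G.
Proof.
  intros H1 H2. destruct (Z_common F G) as (m & a & b & Ha & Hb).
  rewrite (Zle_iff _ _ _ _ _ Ha Hb) in H1. rewrite (Zle_iff _ _ _ _ _ Hb Ha) in H2.
  assert (a = b) by (apply le_antisym; auto). subst b. eapply Zeq; eauto.
Qed.

Definition ZPO : PO := @MkPO Zt Zle Zle_refl Zle_anti Zle_trans.

Fixpoint jf (n : nat) : carrier (TT n) -> forall k, option (carrier (TT k)) :=
  match n as n0 return carrier (TT n0) -> forall k, option (carrier (TT k)) with
  | 0 => fun a => match (a : Empty_set) with end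
  | S n' => fun a => match excluded_middle_informative (exists c, EE n' c = a) with
            | left H => jf n' (proj1_sig (constructive_indefinite_description _ H))
            | right _ => tf (S n') a
            end
  end.

Lemma jf_spec n a : thread (jf n a) /\ jf n a n = Some a.
Proof.
  revert a. induction n as [|n IH]; intro a; [exact (match (a : Empty_set) with end)|].
  simpl. destruct (excluded_middle_informative _) as [H|H].
  - destruct (constructive_indefinite_description _ H) as [c Hc]. simpl.
    destruct (IH c) as [Ht Hv]. split; auto. rewrite (proj1 Ht _ _ Hv). f_equal; exact Hc.
  - split; [|exact (tf_same (S n) a)]. split; [|split].
    + intros k b Hb. destruct (le_lt_dec (S n) k) as [Hk|Hk].
      * rewrite tf_S by auto. rewrite Hb; reflexivity.
      * rewrite tf_lt in Hb by auto; discriminate.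
    + intros k c Hc. destruct (le_lt_dec (S n) k) as [Hk|Hk].
      * rewrite tf_S in Hc by auto. destruct (tf (S n) a k) eqn:E; simpl in Hc; [|discriminate].
        injection Hc; intro Hc'. apply (qemb_inj (EE k)) in Hc'. subst; reflexivity.
      * destruct (Nat.eq_dec k n).
        -- subst k. rewrite tf_same in Hc. injection Hc; intro E; exfalso; apply H; eauto.
        -- rewrite tf_lt in Hc by lia; discriminate.
    + exists (S n), a; exact (tf_same (S n) a).
Qed.

Definition Zj n (a : carrier (TT n)) : Zt := exist _ (jf n a) (proj1 (jf_spec n a)).
Lemma jval n a : proj1_sig (Zj n a) n = Some a.
Proof. apply (proj2 (jf_spec n a)). Qed.

Lemma Zj_emb n a b : Zle (Zj n a) (Zj n b) <-> le a b.
Proof. apply Zle_iff; apply jval. Qed.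

Lemma Zj_inj n a b : Zj n a = Zj n b -> a = b.
Proof. intro E. pose proof (jval n a) as H. rewrite E, jval in H. congruence. Qed.

Definition JQ n : qemb (TT n) ZPO := @MkQemb (TT n) ZPO (Zj n) (fun a b h => proj1 (Zj_emb n a b) h).
Lemma JQ_emb n : is_embedding (JQ n).
Proof. intros a b; apply Zj_emb. Qed.

Lemma Z_eq_j (F : Zt) k a : proj1_sig F k = Some a -> F = Zj k a.
Proof. intro H. eapply Zeq; [exact H| apply jval]. Qed.

Lemma Zj_S n a : Zj (S n) (EE n a) = Zj n a.
Proof.
  symmetry. apply Z_eq_j. apply (proj1 (proj2_sig (Zj n a))). apply jval.
Qed.

Lemma Wcomp (A B C : PO) (f : qemb A B) (g : qemb B C) s :
  dmap W (qemb_comp g f) s = dmap W g (dmap W f s).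
Proof. pose proof HW as HW'. destruct HW' as (_ & H & _). apply H. Qed.

Lemma lift_W n t : dmap W (JQ (S n)) (dmap W (EE n) t) = dmap W (JQ n) t.
Proof.
  rewrite <- Wcomp. replace (qemb_comp (JQ (S n)) (EE n)) with (JQ n); [reflexivity|].
  apply qemb_ext. intro a. symmetry. apply Zj_S.
Qed.

Lemma exists_level (s : carrier (W ZPO)) :
  exists N, forall M, N <= M -> exists t, dmap W (JQ M) t = s.
Proof.
  pose proof HW as HW'. destruct HW' as (_ & _ & _ & Hfin & _).
  destruct (Hfin _ s) as [l Hl].
  assert (HL : exists N, forall F, In F l -> forall M, N <= M -> exists a, proj1_sig F M = Some a).
  { clear Hl. induction l as [|F l IH].
    - exists 0; intros F [].
    - destruct IH as [N HN']. destruct (Z_def F) as (k & a & Ha). exists (N + k).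
      intros G [<-|HG] M HM.
      + eapply Z_up; eauto; lia.
      + apply HN'; auto; lia. }
  destruct HL as [N HN']. exists N. intros M HM.
  apply (Wsupp W HW _ _ _ (JQ_emb M)). intros y Hy.
  destruct (HN' y (Hl y Hy) M HM) as (a & Ha). exists a. symmetry; apply Z_eq_j; exact Ha.
Qed.

Lemma kap_ex (s : carrier (W ZPO)) :
  exists p : {N : nat & carrier (W (TT N))}, dmap W (JQ (projT1 p)) (projT2 p) = s.
Proof.
  destruct (exists_level s) as [N HN']. destruct (HN' N (le_n _)) as [t Ht].
  exists (existT _ N t); exact Ht.
Qed.

Definition kap (s : carrier (W ZPO)) : Zt :=
  let p := proj1_sig (constructive_indefinite_description _ (kap_ex s)) in
  Zj (S (projT1 p)) (inr (projT2 p)).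

Lemma lift_j N t s : dmap W (JQ N) t = s -> forall d, exists t',
  dmap W (JQ (d + N)) t' = s /\ Zj (S (d + N)) (inr t') = Zj (S N) (inr t).
Proof.
  intros H d. induction d as [|d IH]; [exists t; auto|].
  destruct IH as (t' & H1 & H2). exists (dmap W (EE (d + N)) t'). split.
  - simpl plus. rewrite lift_W; auto.
  - rewrite <- H2. exact (Zj_S (S (d + N)) (inr t')).
Qed.

Lemma kap_spec N t s : dmap W (JQ N) t = s -> kap s = Zj (S N) (inr t).
Proof.
  intro H. unfold kap. destruct (constructive_indefinite_description _ _) as [[N0 t0] H0]. simpl in *.
  destruct (lift_j N t s H N0) as (t1 & H1 & E1).
  destruct (lift_j N0 t0 s H0 N) as (t2 & H2 & E2).
  revert t2 H2 E2. rewrite Nat.add_comm. intros t2 H2 E2.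
  rewrite <- H2 in H1. apply qemb_inj in H1. subst t2. rewrite <- E2, <- E1. reflexivity.
Qed.

Definition iot (x : carrier X) : Zt := Zj 1 (inl x).

Lemma Zj_inl n x : Zj (S n) (inl x) = iot x.
Proof.
  induction n; [reflexivity|]. rewrite <- IHn. exact (Zj_S (S n) (inl x)).
Qed.

Lemma kap_at s : exists N t, dmap W (JQ N) t = s /\ kap s = Zj (S N) (inr t).
Proof.
  destruct (exists_level s) as [N HN']. destruct (HN' N (le_n _)) as [t Ht].
  exists N, t; split; auto. apply kap_spec; auto.
Qed.

Lemma kap_at2 s s' : exists N t t', dmap W (JQ N) t = s /\ dmap W (JQ N) t' = s'.
Proof.
  destruct (exists_level s) as [N1 H1]. destruct (exists_level s') as [N2 H2].
  destruct (H1 (N1 + N2)) as [t Ht]; [lia|]. destruct (H2 (N1 + N2)) as [t' Ht']; [lia|].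
  exists (N1 + N2), t, t'; auto.
Qed.

Theorem Z_fixed : is_Kruskal_fixed_point W X ZPO iot kap.
Proof.
  split; [|split; [|split; [|split]]].
  - intros x s. destruct (kap_at s) as (N & t & _ & ->). rewrite <- (Zj_inl N x).
    intro E. apply Zj_inj in E. discriminate.
  - intros x y H. apply (proj1 (Zj_emb 1 (inl x) (inl y)) H).
  - intros x s. destruct (kap_at s) as (N & t & Ht & ->). rewrite <- (Zj_inl N x).
    pose proof (s_Ia W X (STG N) x t) as Ia. split.
    + intro H. apply Zj_emb in H. apply Ia in H. destruct H as (z & Hz & Hle).
      intros z0 ->. exists (Zj N z). split.
      * subst s. apply (Wnat W HW). exists z; split; auto.
      * rewrite <- (Zj_S N z). apply Zj_emb. exact Hle.
    + intro H. destruct (H _ eq_refl) as (y & Hy & Hle). subst s.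
      apply (Wnat W HW) in Hy. destruct Hy as (z & Hz & <-).
      change (qfun (JQ N) z) with (Zj N z) in Hle. rewrite <- (Zj_S N z) in Hle.
      apply Zj_emb in Hle. apply Zj_emb. apply Ia. exists z; split; auto.
  - intros s y. destruct (kap_at s) as (N & t & _ & ->). rewrite <- (Zj_inl N y).
    intro H. apply Zj_emb in H. exact (s_Ib W X (STG N) t y H).
  - intros s s'. destruct (kap_at2 s s') as (N & t & t' & Ht & Ht').
    rewrite (kap_spec N t s Ht), (kap_spec N t' s' Ht').
    pose proof (s_Ic W X (STG N) t t') as Ic.
    pose proof (Wemb W HW _ _ _ (JQ_emb N) t t') as We.
    rewrite Ht, Ht' in We. split.
    + intro H. apply Zj_emb in H. apply Ic in H. destruct H as [H|(z & Hz & H)].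
      * left. apply We. exact H.
      * right. intros z0 ->. exists (Zj N z). split.
        -- subst s'. apply (Wnat W HW). exists z; split; auto.
        -- rewrite <- (Zj_S N z). apply Zj_emb. exact H.
    + intros [H|H]; apply Zj_emb; apply Ic.
      * left. apply We. exact H.
      * right. destruct (H _ eq_refl) as (y & Hy & Hle). subst s'.
        apply (Wnat W HW) in Hy. destruct Hy as (z & Hz & <-). exists z; split; auto.
        change (qfun (JQ N) z) with (Zj N z) in Hle. rewrite <- (Zj_S N z) in Hle.
        apply Zj_emb in Hle. exact Hle.
Qed.

End Colim.

Section Final.
Variable W : PreDilator.
Hypothesis HW : is_PO_dilator W.
Hypothesis HN : is_normal W.
Variable X : PO.

Local Notation TT := (T W HW HN X).
Local Notation ZT := (Zt W HW HN X).

Lemma hgt_ex (F : ZT) : exists k, (exists a, proj1_sig F k = Some a) /\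
   forall m, (exists a, proj1_sig F m = Some a) -> k <= m.
Proof. apply min_nat. apply Z_def. Qed.

Definition hgt (F : ZT) : nat := proj1_sig (constructive_indefinite_description _ (hgt_ex F)).

Lemma hgt_spec F : (exists a, proj1_sig F (hgt F) = Some a) /\
   forall m a, proj1_sig F m = Some a -> hgt F <= m.
Proof.
  unfold hgt. destruct (constructive_indefinite_description _ _) as [k [H1 H2]]; simpl.
  split; auto. intros m a H; apply H2; eauto.
Qed.

Lemma sum_cases n (a : carrier (TT (S n))) :
  (exists x : carrier X, a = inl x) \/ (exists t : carrier (W (TT n)), a = inr t).
Proof.
  refine (match a as a0 return ((exists x : carrier X, a0 = inl x) \/ (exists t : carrier (W (TT n)), a0 = inr t)) with
          | inl x => or_introl (ex_intro _ x eq_refl)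
          | inr t => or_intror (ex_intro _ t eq_refl) end).
Qed.

Lemma Hcase (F : ZT) : (exists x, F = iot W HW HN X x) \/
   (exists s, F = kap W HW HN X s /\ forall u, dsupp W s u -> hgt u < hgt F).
Proof.
  destruct (hgt_spec F) as [[a Ha] Hmin]. clear Hmin.
  remember (hgt F) as k eqn:Ek. destruct k as [|n].
  - exact (match (a : Empty_set) with end).
  - pose proof (Z_eq_j W HW HN X F (S n) a Ha) as HF.
    destruct (sum_cases n a) as [(x & Ex)|(t & Et)].
    + left; exists x. rewrite HF, Ex. apply Zj_inl.
    + right; exists (dmap W (JQ W HW HN X n) t). split.
      * rewrite HF, Et. symmetry; apply kap_spec; reflexivity.
      * intros u Hu. apply (Wnat W HW) in Hu. destruct Hu as (z & Hz & <-).
        destruct (hgt_spec (Zj W HW HN X n z)) as [_ Hm].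
        specialize (Hm n z (jval W HW HN X n z)). simpl. lia.
Qed.

Theorem Z_wpo : (forall Y, is_WPO Y -> is_WPO (W Y)) -> is_WPO X -> is_WPO (ZPO W HW HN X).
Proof.
  intros HWW HX.
  pose proof (Z_fixed W HW HN X) as (_ & _ & _ & _ & F5).
  apply (gen_wpo HW HWW (ZPO W HW HN X) HX (iot W HW HN X) (kap W HW HN X) hgt).
  - intros x y H. apply (Zj_emb W HW HN X 1 (inl x) (inl y)). exact H.
  - intros s t H. apply F5. left; exact H.
  - intros s u Hu. destruct (kap_at W HW HN X s) as (N & t & Ht & ->). subst s.
    apply (Wnat W HW) in Hu. destruct Hu as (z & Hz & <-).
    change (qfun (JQ W HW HN X N) z) with (Zj W HW HN X N z).
    rewrite <- (Zj_S W HW HN X N z). apply Zj_emb.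
    exact (s_If W X (stage W HW HN X N) t z Hz).
  - exact Hcase.
Qed.
End Final.

Theorem corollary4p5 (W TW : PreDilator)
  (iota : forall X : PO, carrier X -> carrier (TW X))
  (kappa : forall X : PO, carrier (W (TW X)) -> carrier (TW X)) :
  is_WPO_dilator W -> is_normal W ->
  is_Kruskal_derivative W TW iota kappa ->
  is_WPO_dilator TW /\ is_normal TW.
Proof.
  intros [HWd HWW] HNW (HTd & HTn & Hinit & _).
  split; [split; [exact HTd|] | exact HTn].
  intros X HX.
  destruct (Hinit X) as [_ Hex].
  destruct (Hex (ZPO W HWd HNW X) (iot W HWd HNW X) (kap W HWd HNW X) (Z_fixed W HWd HNW X))
    as [f _].
  intro s. destruct (Z_wpo W HWd HNW X HWW HX (fun i => f (s i))) as (i & j & Hij & Hle).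
  exists i, j; split; auto. exact (qfun_qe f _ _ Hle).
Qed.
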